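(* Let $K$ be a number field, let $\alpha>1$ be real, and let $F\in K[[x^{\mathbb{R}}]]$ be a Hahn series satisfying $\sum_{i=0}^d P_i(x)F(x^{\alpha^i})=0$ for some polynomials $P_0,\dots,P_d\in K[x]$ with $P_d\ne0$. For $s\in\mathbb{R}$ let $T(s)=\alpha^{\mathbb{Z}}s+\mathbb{Z}[\alpha,\alpha^{-1}]=\{\alpha^m s+r: m\in\mathbb{Z},\ r\in\mathbb{Z}[\alpha,\alpha^{-1}]\}$; these sets are the equivalence classes of the relation $x\sim y$ iff $\alpha^m x+r=y$ for some $m\in\mathbb{Z}$, $r\in\mathbb{Z}[\alpha,\alpha^{-1}]$. Let $\widehat{P(F)}$ be the set of equivalence classes meeting $P(F)$. Then $$F(x)=\sum_{T(s)\in\widehat{P(F)}}{}_{T(s)}[F(x)],$$ and each ${}_{T(s)}[F]$ is $\alpha$-Mahler, satisfying the same equation $\sum_{i=0}^d P_i(x)\,{}_{T(s)}[F](x^{\alpha^i})=0$.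
   Context: $K[[x^{\mathbb{R}}]]$ is the field of Hahn series $\sum_{i\in\mathbb{R}} f_ix^i$ ($f_i\in K$) with well-ordered support $P(F)=\{i:f_i\ne0\}$; $F(x^\gamma)=\sum_i f_ix^{\gamma i}$. $\mathbb{Z}[\alpha,\alpha^{-1}]$ is the subring of $\mathbb{R}$ generated by $\alpha$ and $\alpha^{-1}$. For $A\subseteq\mathbb{R}$, ${}_A[G]$ denotes the Hahn series consisting of the terms of $G$ with exponents in $A$. *)

(* Defs.v *)
From Stdlib Require Import Reals List ClassicalDescription.
From HB Require Import structures.
From mathcomp Require Import all_boot all_order all_algebra all_field.
Set Implicit Arguments. Unset Strict Implicit. Unset Printing Implicit Defensive.
Import GRing.Theory.
Local Open Scope ring_scope.

Notation numberField := (fieldExtType rat).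

Section Hahn.
Variable K : numberField.

(* A formal series sum_i f_i x^i (i real) is represented by its coefficient
   function f : R -> K.  Support P(F) = {i | f_i <> 0}. *)
Definition supp (f : R -> K) : R -> Prop := fun i => f i <> 0.

Definition well_ordered (A : R -> Prop) : Prop :=
  forall B : R -> Prop, (forall x, B x -> A x) -> (exists x, B x) ->
    exists m, B m /\ forall y, B y -> Rle m y.

Definition hahn (f : R -> K) : Prop := well_ordered (supp f).

(* F(x^g) = sum_i f_i x^{g i}, for g > 0: coefficient at j is f_{j/g}. *)
Definition msubst (g : R) (f : R -> K) : R -> K := fun j => f (Rdiv j g).

Definition pmul (p : {poly K}) (f : R -> K) : R -> K :=
  fun j => \sum_(k < size p) p`_k * f (Rminus j (INR k)).

Definition mahler_eq (alpha : R) (d : nat) (P : nat -> {poly K}) (f : R -> K) : Prop :=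
  forall j : R, \sum_(i < d.+1) pmul (P i) (msubst (pow alpha i) f) j = 0.

Definition restr (A : R -> Prop) (f : R -> K) : R -> K :=
  fun j => if excluded_middle_informative (A j) then f j else 0.

Definition hsum (I : Type) (G : I -> R -> K) (H : R -> K) : Prop :=
  well_ordered (fun j => exists i, G i j <> 0) /\
  forall j, exists s : seq I, NoDup s /\ (forall i, ~ In i s -> G i j = 0) /\
     H j = \sum_(i <- s) G i j.
End Hahn.

Inductive Zalpha (alpha : R) : R -> Prop :=
| Za_one : Zalpha alpha R1
| Za_alpha : Zalpha alpha alpha
| Za_inv : Zalpha alpha (Rinv alpha)
| Za_opp : forall x, Zalpha alpha x -> Zalpha alpha (Ropp x)
| Za_add : forall x y, Zalpha alpha x -> Zalpha alpha y -> Zalpha alpha (Rplus x y)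
| Za_mul : forall x y, Zalpha alpha x -> Zalpha alpha y -> Zalpha alpha (Rmult x y).

Definition Tclass (alpha s : R) : R -> Prop :=
  fun y => exists (m : Z) (r : R), Zalpha alpha r /\ y = Rplus (Rmult (powerRZ alpha m) s) r.

Definition classes (K : numberField) (alpha : R) (F : R -> K) : Type :=
  { T : R -> Prop | exists s, supp F s /\ T = Tclass alpha s }.

(* Main.v *)
Require Import Defs.
From Stdlib Require Import Reals.
From mathcomp Require Import all_boot all_algebra all_field.
From Stdlib Require Import Classical FunctionalExtensionality PropExtensionality Lra Lia ClassicalDescription.

Section H.
Local Open Scope R_scope.

Lemma Za_pow a n : Zalpha a (a ^ n).
Proof. induction n; simpl. apply Za_one. apply Za_mul; [apply Za_alpha|exact IHn]. Qed.

Lemma Za_powinv a n : Zalpha a ((/ a) ^ n).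
Proof. induction n; simpl. apply Za_one. apply Za_mul; [apply Za_inv|exact IHn]. Qed.

Lemma Za_powerRZ a n : a <> 0 -> Zalpha a (powerRZ a n).
Proof.
intros Ha; destruct n; simpl. apply Za_one. apply Za_pow.
rewrite (Rinv_pow_depr _ _ Ha). apply Za_powinv.
Qed.

Lemma Za_zero a : Zalpha a 0.
Proof. replace 0 with (R1 + - R1) by ring. apply Za_add; [apply Za_one| apply Za_opp, Za_one]. Qed.

Lemma Za_INR a k : Zalpha a (INR k).
Proof. induction k. apply Za_zero. rewrite S_INR. apply Za_add; [exact IHk|apply Za_one]. Qed.

Lemma Tcl a s y n r : a <> 0 -> Tclass a s y -> Zalpha a r ->
  Tclass a s (powerRZ a n * y + r).
Proof.
intros Ha [m [r0 [Hr0 ->]]] Hr.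
exists (Z.add n m), (powerRZ a n * r0 + r). split.
apply Za_add; [apply Za_mul; [apply Za_powerRZ; exact Ha|exact Hr0]|exact Hr].
rewrite (powerRZ_add _ _ _ Ha). ring.
Qed.

Lemma Tself a j : Tclass a j j.
Proof. exists Z0, 0. split. apply Za_zero. simpl. ring. Qed.

Lemma Teq a s j : a <> 0 -> Tclass a s j -> Tclass a s = Tclass a j.
Proof.
intros Ha Hj. apply functional_extensionality; intro y.
apply propositional_extensionality. split.
- intros [n [r [Hr ->]]]. destruct Hj as [m [r0 [Hr0 Ej]]].
  replace (powerRZ a n * s + r) with
    (powerRZ a (Z.sub n m) * j + (- (powerRZ a (Z.sub n m) * r0) + r)).
  apply Tcl; [exact Ha|apply Tself|].
  apply Za_add; [apply Za_opp, Za_mul; [apply Za_powerRZ; exact Ha|exact Hr0]|exact Hr].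
  rewrite Ej. replace n with (Z.add (Z.sub n m) m) at 3 by ring.
  rewrite (powerRZ_add _ _ _ Ha). ring.
- intros [n [r [Hr ->]]]. apply Tcl; assumption.
Qed.

Lemma Tshift a s j k i : 1 < a ->
  (Tclass a s (Rdiv (Rminus j (INR k)) (pow a i)) <-> Tclass a s j).
Proof.
intros Ha. assert (Ha0 : a <> 0) by lra.
assert (Hp : a ^ i <> 0) by (apply pow_nonzero; exact Ha0).
split; intro H.
- replace j with (powerRZ a (Z.of_nat i) * ((j - INR k) / a ^ i) + INR k).
  apply Tcl; [exact Ha0|exact H|apply Za_INR].
  rewrite <- pow_powerRZ. field. exact Hp.
- replace ((j - INR k) / a ^ i) with (powerRZ a (Z.opp (Z.of_nat i)) * j + - (INR k * powerRZ a (Z.opp (Z.of_nat i)))).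
  apply Tcl; [exact Ha0|exact H|apply Za_opp, Za_mul; [apply Za_INR|apply Za_powerRZ; exact Ha0]].
  assert (E : powerRZ a (Z.opp (Z.of_nat i)) = / a ^ i).
  { rewrite pow_powerRZ. destruct (Z.of_nat i); simpl; try reflexivity. field. rewrite Rinv_inv. reflexivity. }
  rewrite E. field. exact Hp.
Qed.
End H.

Local Open Scope ring_scope.
Theorem mainTheorem7 (K : numberField) (alpha : R) (F : R -> K)
    (d : nat) (P : nat -> {poly K}) :
  Rlt R1 alpha -> hahn F -> P d != 0%R -> mahler_eq alpha d P F ->
  hsum (fun T : classes alpha F => restr (proj1_sig T) F) F /\
  (forall T : classes alpha F,
     hahn (restr (proj1_sig T) F) /\ mahler_eq alpha d P (restr (proj1_sig T) F)).
Proof.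
move=> Ha HF _ HM.
have Ha0 : alpha <> R0 by move=> E; rewrite E in Ha; lra.
have restr_supp : forall T j, restr T F j <> 0 -> supp F j.
  move=> T j; rewrite /restr; case: excluded_middle_informative => // _ H; exact H.
have hahn_sub : forall A : R -> Prop, (forall j, A j -> supp F j) -> well_ordered A.
  move=> A HA B HB; apply: HF => x /HB; exact: HA.
split; last first.
  move=> [T [s [Hs ET]]] /=; split.
    apply: hahn_sub => j; exact: restr_supp.
  move=> j; rewrite /pmul /msubst /restr.
  case: (classic (T j)) => Hj.
    apply: etrans (HM j); apply: eq_bigr => i _; apply: eq_bigr => k _.
    case: excluded_middle_informative => // Hn; exfalso; apply: Hn.
    by rewrite ET; apply/Tshift => //; rewrite -ET.
  apply: big1 => i _; apply: big1 => k _.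
  case: excluded_middle_informative => Hn; last by rewrite GRing.mulr0.
  by exfalso; apply: Hj; rewrite ET; apply/(Tshift _ _ _ k i Ha); rewrite -ET.
split.
  apply: hahn_sub => j [T]; exact: restr_supp.
move=> j.
case: (classic (F j = 0)) => Hj.
  exists [::]; split; first by constructor.
  split; last by rewrite big_nil.
  by move=> T _; rewrite /restr; case: excluded_middle_informative.
pose Tj : classes alpha F := exist _ (Tclass alpha j) (ex_intro _ j (conj Hj erefl)).
exists [:: Tj]; split; first by constructor; [case | constructor].
split; last first.
  rewrite big_seq1 /restr /=; case: excluded_middle_informative => // H.
  by exfalso; apply: H; apply: Tself.
case=> T pf Hn /=; rewrite /restr; case: excluded_middle_informative => // HT.
exfalso; apply: Hn; left.
have [s0 [_ ET]] := pf.
move: pf; rewrite ET (@Teq alpha s0 j Ha0 (_ : Tclass alpha s0 j)); last by rewrite -ET.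
by move=> pf; rewrite /Tj; congr exist; apply: proof_irrelevance.
Qed.
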